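(* Let $R$ be any difference ring and $F,G\subseteq R$. Then $\langle F\rangle_r\cap\langle G\rangle_r=\langle FG\rangle_r$, where $FG=\{fg:f\in F,g\in G\}$. Consequently, if $I$ and $J$ are $\sigma$-ideals of $R$, then $\langle I\rangle_r\cap\langle J\rangle_r=\langle I\cap J\rangle_r=\langle IJ\rangle_r$.
   Context: A difference ring is a commutative unital ring $R$ with a ring endomorphism $\sigma$. A $\sigma$-ideal is an ideal $I$ with $\sigma(I)\subseteq I$; it is well-mixed if $ab\in I$ implies $a\sigma(b)\in I$. $\langle F\rangle_r$ denotes the smallest radical well-mixed $\sigma$-ideal of $R$ containing $F$. *)

(* Defs.v *)
From HB Require Import structures.
From mathcomp Require Import all_boot all_order all_algebra.
Set Implicit Arguments. Unset Strict Implicit. Unset Printing Implicit Defensive.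
Import GRing.Theory.
Local Open Scope ring_scope.

Section DiffRing.
Variables (R : comPzRingType) (s : {rmorphism R -> R}).

Definition is_ideal (I : R -> Prop) : Prop :=
  [/\ I 0, (forall a b, I a -> I b -> I (a - b)) & (forall r a, I a -> I (r * a))].

Definition sigma_ideal (I : R -> Prop) : Prop :=
  is_ideal I /\ (forall a, I a -> I (s a)).

Definition well_mixed (I : R -> Prop) : Prop :=
  forall a b, I (a * b) -> I (a * s b).

Definition radical (I : R -> Prop) : Prop :=
  forall a n, I (a ^+ n.+1) -> I a.

Definition radical_wm_sigma_ideal (I : R -> Prop) : Prop :=
  [/\ sigma_ideal I, well_mixed I & radical I].

Definition rwm_closure (F : R -> Prop) : R -> Prop :=
  fun x => forall I, radical_wm_sigma_ideal I -> (forall f, F f -> I f) -> I x.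

End DiffRing.

Definition setI_ {T} (A B : T -> Prop) : T -> Prop := fun x => A x /\ B x.

Definition set_prod {R : comPzRingType} (F G : R -> Prop) : R -> Prop :=
  fun x => exists f g, [/\ F f, G g & x = f * g].

Definition ideal_prod {R : comPzRingType} (I J : R -> Prop) : R -> Prop :=
  fun x => forall K, is_ideal K -> (forall a b, I a -> J b -> K (a * b)) -> K x.

(* Main.v *)
Require Import Defs.
From mathcomp Require Import all_boot all_order all_algebra.
From Stdlib Require Import FunctionalExtensionality PropExtensionality.
Set Implicit Arguments. Unset Strict Implicit.
Import GRing.Theory.
Local Open Scope ring_scope.

Lemma pred_ext {T} (A B : T -> Prop) : (forall x, A x <-> B x) -> A = B.
Proof.
move=> h; apply: functional_extensionality => x; apply: propositional_extensionality; exact: h.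
Qed.

Section L.
Variables (R : comPzRingType) (s : {rmorphism R -> R}).

Lemma cl_rwm F : radical_wm_sigma_ideal s (rwm_closure s F).
Proof.
split; [split; [split|]| |].
- by move=> I [[[]]].
- by move=> a b ha hb I hI hF; case: (hI) => [[[_ hs _] _] _ _]; apply: hs; [apply: ha|apply: hb].
- by move=> r a ha I hI hF; case: (hI) => [[[_ _ hm] _] _ _]; apply: hm; apply: ha.
- by move=> a ha I hI hF; case: (hI) => [[_ hsg] _ _]; apply: hsg; apply: ha.
- by move=> a b ha I hI hF; case: (hI) => [_ hw _]; apply: hw; apply: ha.
- by move=> a n ha I hI hF; case: (hI) => [_ _ hr]; apply: (hr _ n); apply: ha.
Qed.

Lemma cl_sub (F : R -> Prop) x : F x -> rwm_closure s F x.
Proof. by move=> hx I _ hF; apply: hF. Qed.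

Lemma cl_min (F I : R -> Prop) : radical_wm_sigma_ideal s I -> (forall f, F f -> I f) ->
  forall x, rwm_closure s F x -> I x.
Proof. by move=> hI hF x hx; apply: hx. Qed.

Lemma cl_mono (F G : R -> Prop) : (forall f, F f -> rwm_closure s G f) ->
  forall x, rwm_closure s F x -> rwm_closure s G x.
Proof. move=> h; apply: cl_min => //; exact: cl_rwm. Qed.

Lemma colon_rwm (I : R -> Prop) x : radical_wm_sigma_ideal s I ->
  radical_wm_sigma_ideal s (fun y => I (x * y)).
Proof.
case=> [[[h0 hsub hmul] hsg] hw hr].
split; [split; [split|]| |].
- by rewrite mulr0.
- by move=> a b ha hb; rewrite mulrBr; apply: hsub.
- by move=> r a ha; rewrite mulrCA; apply: hmul.
- by move=> a ha; apply: hw.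
- by move=> a b hab; rewrite mulrA; apply: hw; rewrite -mulrA.
- move=> a n ha; apply: (hr _ n).
  have -> : (x * a) ^+ n.+1 = x ^+ n * (x * a ^+ n.+1) by rewrite exprMn exprS mulrA (mulrC _ x).
  by apply: hmul.
Qed.

Lemma part1 (F G : R -> Prop) :
  setI_ (rwm_closure s F) (rwm_closure s G) = rwm_closure s (set_prod F G).
Proof.
apply: pred_ext => x; split.
- case=> hxF hxG I hI hFG.
  have key : forall a, rwm_closure s F a -> forall b, rwm_closure s G b -> I (a * b).
    move=> a ha.
    have hG : forall g, G g -> I (a * g).
      move=> g hg.
      rewrite mulrC; apply: (cl_min (colon_rwm g hI) _ ha) => /=.
      by move=> f hf; rewrite mulrC; apply: hFG; exists f, g.
    exact: (cl_min (colon_rwm a hI) hG).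
  case: hI => [_ _ hr]; apply: (hr _ 1%N); rewrite expr2; exact: key.
- move=> hx; split; apply: (cl_mono _ hx) => y [f [g [hf hg ->]]].
  + case: (cl_rwm F) => [[[_ _ hm] _] _ _]; rewrite mulrC; apply: hm; exact: cl_sub.
  + case: (cl_rwm G) => [[[_ _ hm] _] _ _]; apply: hm; exact: cl_sub.
Qed.

End L.

Theorem proposition5p2 (R : comPzRingType) (s : {rmorphism R -> R}) :
  (forall F G : R -> Prop,
     setI_ (rwm_closure s F) (rwm_closure s G) = rwm_closure s (set_prod F G))
  /\
  (forall I J : R -> Prop, sigma_ideal s I -> sigma_ideal s J ->
     setI_ (rwm_closure s I) (rwm_closure s J) = rwm_closure s (setI_ I J)
     /\ rwm_closure s (setI_ I J) = rwm_closure s (ideal_prod I J)).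
Proof.
split; first exact: part1.
move=> I J [[_ _ hmI] _] [[_ _ hmJ] _].
have e1 : rwm_closure s (set_prod I J) = rwm_closure s (setI_ I J).
  apply: pred_ext => x; split; apply: cl_mono => y.
  - case=> [f [g [hf hg ->]]]; apply: cl_sub; split.
    + by rewrite mulrC; apply: hmI.
    + by apply: hmJ.
  - case=> hy1 hy2; case: (cl_rwm s (set_prod I J)) => [_ _ hr].
    apply: (hr _ 1%N); rewrite expr2; apply: cl_sub; by exists y, y.
have e2 : rwm_closure s (set_prod I J) = rwm_closure s (ideal_prod I J).
  apply: pred_ext => x; split; apply: cl_mono => y.
  - case=> [f [g [hf hg ->]]]; apply: cl_sub => K _ hK; exact: hK.
  - move=> hy; apply: hy; first by case: (cl_rwm s (set_prod I J)) => [[]].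
    by move=> a b ha hb; apply: cl_sub; exists a, b.
by rewrite part1 -e1 e2.
Qed.
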